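(* Let $\alpha>0$ and $\sigma>0$, and let $\pi_{\alpha,\sigma}$, $(c_n)_{n\ge0}$, $\mathbb F_\sigma(\mathbb C)$ and $\mathcal S$ be as in the context. Then for each $f\in L^2(\alpha\mathbb N_0,\pi_{\alpha,\sigma})$ and each $z\in\mathbb C$, $$(\mathcal Sf)(z)=\int_{\alpha\mathbb N_0} f\,d\pi_{\alpha,\sigma+\alpha z}=\exp\Big(-\frac{\sigma+\alpha z}{\alpha^2}\Big)\sum_{n=0}^\infty f(\alpha n)\,\frac{1}{n!}\Big(\frac{\sigma+\alpha z}{\alpha^2}\Big)^n .$$ In particular, for real $z>-\sigma/\alpha$ the integration is with respect to the probability distribution $\pi_{\alpha,\sigma+\alpha z}$. Moreover, the complex-valued series on the right-hand side converges absolutely and uniformly on compact subsets of $\mathbb C$.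
   Context: For $\alpha>0$ and $w\in\mathbb C$, $\pi_{\alpha,w}$ denotes the complex-valued measure on $\alpha\mathbb N_0=\{0,\alpha,2\alpha,\dots\}$ given by $\pi_{\alpha,w}=\exp(-w/\alpha^2)\sum_{n=0}^\infty \frac{1}{n!}(w/\alpha^2)^n\delta_{\alpha n}$, where $\delta_y$ is the Dirac measure at $y$; for $w>0$ this is a probability measure (for $\alpha=1$ the Poisson distribution with parameter $w$). Fix $\sigma>0$. Let $(c_n)_{n\ge0}$ be the monic polynomial sequence orthogonal with respect to $\pi_{\alpha,\sigma}$; its exponential generating function is $\sum_{n\ge0}\frac{t^n}{n!}c_n(z)=\exp\big(\frac z\alpha\log(1+t\alpha)-\frac{\sigma t}{\alpha}\big)$, and $\|c_n\|^2_{L^2(\alpha\mathbb N_0,\pi_{\alpha,\sigma})}=n!\,\sigma^n$. The Bargmann space $\mathbb F_\sigma(\mathbb C)$ is the Hilbert space of entire functions $f(z)=\sum_n f_nz^n$ with $\sum_n|f_n|^2n!\sigma^n<\infty$, with inner product $(f,g)=\sum_n f_n\overline{g_n}\,n!\,\sigma^n$. The generalized Segal--Bargmann transform $\mathcal S:L^2(\alpha\mathbb N_0,\pi_{\alpha,\sigma})\to\mathbb F_\sigma(\mathbb C)$ is the unitary operator with $(\mathcal Sc_n)(z)=z^n$ for all $n\in\mathbb N_0$. *)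

(* Defs.v *)
From Stdlib Require Import Reals List Arith Factorial.
From Coquelicot Require Import Coquelicot.

Open Scope R_scope.

(* Sum of a complex series (componentwise Coquelicot [Series]; equals the
   sum whenever the series converges). *)
Definition CSeries (a : nat -> Complex.C) : Complex.C :=
  (Series (fun n => fst (a n)), Series (fun n => snd (a n))).

Definition Cexp (w : Complex.C) : Complex.C :=
  CSeries (fun n => Cdiv (Cpow w n) (RtoC (INR (Factorial.fact n)))).

(* Mass of the complex measure pi_{alpha,w} at the point alpha*k :
   exp(-w/alpha^2) (w/alpha^2)^k / k!. *)
Definition pi_mass (alpha : R) (w : Complex.C) (k : nat) : Complex.C :=
  Cmult (Cexp (Copp (Cdiv w (RtoC (alpha ^ 2)))))
        (Cdiv (Cpow (Cdiv w (RtoC (alpha ^ 2))) k) (RtoC (INR (Factorial.fact k)))).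

Definition monic_poly (a : nat -> nat -> R) (n : nat) (x : R) : R :=
  x ^ n + fold_right Rplus 0 (map (fun k => a n k * x ^ k) (seq 0 n)).

Definition orthogonal_wrt (alpha sigma : R) (c : nat -> R -> R) : Prop :=
  forall n m : nat, n <> m ->
    is_series (fun k => Cmult (RtoC (c n (alpha * INR k) * c m (alpha * INR k)))
                              (pi_mass alpha (RtoC sigma) k)) (RtoC 0).

(* A function on alpha*N_0 is represented by f : nat -> C, f k = f(alpha k).
   Membership in L^2(alpha N_0, pi_{alpha,sigma}). *)
Definition in_L2 (alpha sigma : R) (f : nat -> Complex.C) : Prop :=
  ex_series (fun k => Cmod (f k) ^ 2 * fst (pi_mass alpha (RtoC sigma) k)).

Definition coef (alpha sigma : R) (c : nat -> R -> R) (f : nat -> Complex.C)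
  (n : nat) : Complex.C :=
  Cdiv (CSeries (fun k => Cmult (Cmult (f k) (RtoC (c n (alpha * INR k))))
                                (pi_mass alpha (RtoC sigma) k)))
       (CSeries (fun k => Cmult (RtoC (c n (alpha * INR k) ^ 2))
                                (pi_mass alpha (RtoC sigma) k))).

(* Generalized Segal--Bargmann transform: the unitary map with S c_n = z^n,
   i.e. S (sum_n a_n c_n) = sum_n a_n z^n. *)
Definition SB_transform (alpha sigma : R) (c : nat -> R -> R)
  (f : nat -> Complex.C) (z : Complex.C) : Complex.C :=
  CSeries (fun n => Cmult (coef alpha sigma c f n) (Cpow z n)).

Definition rhs_term (alpha sigma : R) (f : nat -> Complex.C) (z : Complex.C)
  (n : nat) : Complex.C :=
  let w := Cplus (RtoC sigma) (Cmult (RtoC alpha) z) in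
  Cmult (f n) (Cdiv (Cpow (Cdiv w (RtoC (alpha ^ 2))) n) (RtoC (INR (Factorial.fact n)))).

(* Main.v *)
Require Import Defs.
From Stdlib Require Import Reals List Lra Lia Factorial Arith.
From Coquelicot Require Import Coquelicot.
Open Scope R_scope.

Lemma sum_n_fst (a : nat -> C) n : fst (sum_n a n) = sum_n (fun k => fst (a k)) n.
Proof.
  induction n. rewrite !sum_O; auto.
  rewrite !sum_Sn. rewrite <- IHn. reflexivity.
Qed.
Lemma sum_n_snd (a : nat -> C) n : snd (sum_n a n) = sum_n (fun k => snd (a k)) n.
Proof.
  induction n. rewrite !sum_O; auto.
  rewrite !sum_Sn. rewrite <- IHn. reflexivity.
Qed.

Lemma C_is_series_split (a : nat -> C) (l : C) :
  is_series a l <-> (is_series (fun k => fst (a k)) (fst l) /\ is_series (fun k => snd (a k)) (snd l)).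
Proof.
  split.
  - intros H. assert (H' := proj1 (filterlim_locally _ _) H). split; apply (proj2 (filterlim_locally _ _)); intros eps; specialize (H' eps); revert H'; apply filter_imp;
    intros n [H1 H2]; [rewrite <- sum_n_fst | rewrite <- sum_n_snd]; auto.
  - intros [H1 H2]. apply (proj2 (filterlim_locally _ _)). intros eps.
    assert (H1' := proj1 (filterlim_locally _ _) H1 eps).
    assert (H2' := proj1 (filterlim_locally _ _) H2 eps).
    generalize (filter_and _ _ H1' H2'). apply filter_imp.
    intros n [h1 h2]. split; [rewrite sum_n_fst | rewrite sum_n_snd]; auto.
Qed.

Lemma Rplus_plus (x y : R) : plus x y = x + y. Proof. reflexivity. Qed.
Lemma Ropp_opp (x : R) : opp x = - x. Proof. reflexivity. Qed.

Ltac rplus := repeat match goal with |- context[@plus ?G ?x ?y] => change (@plus G x y) with (Rplus x y) end.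

Lemma Ris_series_minus (a b : nat -> R) la lb : is_series a la -> is_series b lb ->
  is_series (fun n => a n - b n) (la - lb).
Proof. intros Ha Hb. exact (@is_series_minus R_AbsRing R_NormedModule _ _ _ _ Ha Hb). Qed.
Lemma Ris_series_plus (a b : nat -> R) la lb : is_series a la -> is_series b lb ->
  is_series (fun n => a n + b n) (la + lb).
Proof. intros Ha Hb. exact (@is_series_plus R_AbsRing R_NormedModule _ _ _ _ Ha Hb). Qed.
Lemma Ris_series_scal (c : R) (a : nat -> R) la : is_series a la ->
  is_series (fun n => c * a n) (c * la).
Proof. intros Ha. exact (@is_series_scal R_AbsRing R_NormedModule c _ _ Ha). Qed.

Lemma ex_series_Rle (a b : nat -> R) : (forall n, Rabs (a n) <= b n) -> ex_series b -> ex_series a.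
Proof. intros H Hb. apply (ex_series_le a b); auto. Qed.

Lemma partial_le_limit (b : nat -> R) l N : (forall k, 0 <= b k) -> is_series b l -> sum_n b N <= l.
Proof.
  intros Hp Hb. apply (is_lim_seq_incr_compare (sum_n b) l Hb).
  intros n. rewrite sum_Sn. rewrite Rplus_plus. specialize (Hp (S n)). lra.
Qed.

Lemma partial_le_Series (b : nat -> R) N : (forall k, 0 <= b k) -> ex_series b -> sum_n b N <= Series b.
Proof. intros Hp Hb. apply partial_le_limit; auto. apply Series_correct; auto. Qed.

Lemma partial_nonneg (b : nat -> R) N : (forall k, 0 <= b k) -> 0 <= sum_n b N.
Proof.
  intros Hp. induction N. rewrite sum_O. auto. rewrite sum_Sn, Rplus_plus. specialize (Hp (S N)). lra.
Qed.

Lemma term_le_partial (b : nat -> R) N : (forall k, 0 <= b k) -> b N <= sum_n b N.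
Proof.
  intros Hp. destruct N. rewrite sum_O. lra. rewrite sum_Sn, Rplus_plus.
  assert (0 <= sum_n b N) by (apply partial_nonneg; auto). lra.
Qed.

Lemma limit_le_bound (b : nat -> R) l M : is_series b l -> (forall N, sum_n b N <= M) -> l <= M.
Proof.
  intros Hb HM. assert (H := is_lim_seq_le (sum_n b) (fun _ => M) l M HM Hb (is_lim_seq_const M)).
  simpl in H. auto.
Qed.

Lemma ex_series_pos_bounded (b : nat -> R) M : (forall k, 0 <= b k) -> (forall N, sum_n b N <= M) -> ex_series b.
Proof.
  intros Hp HM. destruct (ex_finite_lim_seq_incr (sum_n b) M) as [l Hl].
  - intros n. rewrite sum_Sn, Rplus_plus. specialize (Hp (S n)). lra.
  - auto.
  - exists l. exact Hl.
Qed.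

Lemma Series_nonneg (b : nat -> R) : (forall k, 0 <= b k) -> ex_series b -> 0 <= Series b.
Proof.
  intros Hp He.
  apply Rle_trans with (sum_n b 0). apply partial_nonneg; auto. apply partial_le_Series; auto.
Qed.

Lemma is_series_finsum (a : nat -> nat -> R) (Sm : nat -> R) N :
  (forall n, is_series (a n) (Sm n)) ->
  is_series (fun k => sum_n (fun n => a n k) N) (sum_n Sm N).
Proof.
  intros H. induction N.
  - rewrite sum_O. apply is_series_ext with (a 0%nat); auto. intros k; rewrite sum_O; auto.
  - rewrite sum_Sn. apply is_series_ext with (fun k => plus (sum_n (fun n => a n k) N) (a (S N) k)).
    intros k; rewrite sum_Sn; auto. apply (@is_series_plus R_AbsRing R_NormedModule); auto.
Qed.

Lemma is_series_Series_le (c d : nat -> R) l m : (forall n, c n <= d n) -> is_series c l -> is_series d m -> l <= m.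
Proof.
  intros H Hc Hd. assert (H' := is_lim_seq_le (sum_n c) (sum_n d) l m). simpl in H'. apply H'; auto.
  intros n. clear -H. induction n. rewrite !sum_O; auto. rewrite !sum_Sn; rplus. specialize (H (S n)). lra.
Qed.

Lemma fubini_pos (b : nat -> nat -> R) :
  (forall n k, 0 <= b n k) -> (forall n, ex_series (b n)) -> ex_series (fun n => Series (b n)) ->
  (forall k, ex_series (fun n => b n k)) /\
  is_series (fun k => Series (fun n => b n k)) (Series (fun n => Series (b n))).
Proof.
  intros Hp Hr Hc.
  assert (Hk : forall k, ex_series (fun n => b n k)).
  { intros k. apply ex_series_Rle with (fun n => Series (b n)); auto.
    intros n. rewrite Rabs_pos_eq; auto. apply Rle_trans with (sum_n (b n) k).
    apply term_le_partial; auto. apply partial_le_Series; auto. }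
  split; auto.
  set (B := fun k => Series (fun n => b n k)).
  assert (HB : forall K, is_series (fun n => sum_n (b n) K) (sum_n B K)).
  { intros K. apply (is_series_finsum (fun k n => b n k) B K). intros k. apply Series_correct; auto. }
  assert (Hle1 : forall K, sum_n B K <= Series (fun n => Series (b n))).
  { intros K. apply is_series_Series_le with (fun n => sum_n (b n) K) (fun n => Series (b n)); auto.
    intros n; apply partial_le_Series; auto. apply Series_correct; auto. }
  assert (HBp : forall k, 0 <= B k). { intros k. apply Series_nonneg; auto. }
  assert (HBe : ex_series B) by (apply ex_series_pos_bounded with (Series (fun n => Series (b n))); auto).
  assert (HA : forall N, is_series (fun k => sum_n (fun n => b n k) N) (sum_n (fun n => Series (b n)) N)).
  { intros N. apply is_series_finsum. intros n. apply Series_correct; auto. }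
  assert (Hle2 : forall N, sum_n (fun n => Series (b n)) N <= Series B).
  { intros N. apply is_series_Series_le with (fun k => sum_n (fun n => b n k) N) B; auto.
    intros k. apply partial_le_Series; auto. apply Series_correct; auto. }
  assert (E1 : Series B <= Series (fun n => Series (b n))).
  { apply limit_le_bound with B; auto. apply Series_correct; auto. }
  assert (E2 : Series (fun n => Series (b n)) <= Series B).
  { apply limit_le_bound with (fun n => Series (b n)); auto. apply Series_correct; auto. }
  replace (Series (fun n => Series (b n))) with (Series B) by lra. apply Series_correct; auto.
Qed.

Lemma fubini (a : nat -> nat -> R) :
  (forall n, ex_series (fun k => Rabs (a n k))) -> ex_series (fun n => Series (fun k => Rabs (a n k))) ->
  (forall k, ex_series (fun n => a n k)) /\
  is_series (fun k => Series (fun n => a n k)) (Series (fun n => Series (a n))).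
Proof.
  intros Hr Hc.
  set (p := fun n k => (Rabs (a n k) + a n k) / 2).
  set (m := fun n k => (Rabs (a n k) - a n k) / 2).
  assert (Hpp : forall n k, 0 <= p n k) by (intros; unfold p; generalize (Rle_abs (a n k)); generalize (Rle_abs (a n k)); generalize (Rle_abs (- a n k)); rewrite Rabs_Ropp; lra).
  assert (Hmp : forall n k, 0 <= m n k) by (intros; unfold m; generalize (Rle_abs (a n k)); generalize (Rle_abs (- a n k)); rewrite Rabs_Ropp; lra).
  assert (Hpl : forall n k, p n k <= Rabs (a n k)) by (intros; unfold p; generalize (Rle_abs (a n k)); generalize (Rle_abs (- a n k)); rewrite Rabs_Ropp; lra).
  assert (Hml : forall n k, m n k <= Rabs (a n k)) by (intros; unfold m; generalize (Rle_abs (a n k)); generalize (Rle_abs (a n k)); generalize (Rle_abs (- a n k)); rewrite Rabs_Ropp; lra).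
  assert (Hpr : forall n, ex_series (p n)).
  { intros n. apply ex_series_Rle with (fun k => Rabs (a n k)); auto. intros k; rewrite Rabs_pos_eq; auto. }
  assert (Hmr : forall n, ex_series (m n)).
  { intros n. apply ex_series_Rle with (fun k => Rabs (a n k)); auto. intros k; rewrite Rabs_pos_eq; auto. }
  assert (Hpc : ex_series (fun n => Series (p n))).
  { apply ex_series_Rle with (fun n => Series (fun k => Rabs (a n k))); auto. intros n.
    rewrite Rabs_pos_eq. apply Series_le; auto. apply Series_nonneg; auto. }
  assert (Hmc : ex_series (fun n => Series (m n))).
  { apply ex_series_Rle with (fun n => Series (fun k => Rabs (a n k))); auto. intros n.
    rewrite Rabs_pos_eq. apply Series_le; auto. apply Series_nonneg; auto. }
  destruct (fubini_pos p Hpp Hpr Hpc) as [Hpk Hps].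
  destruct (fubini_pos m Hmp Hmr Hmc) as [Hmk Hms].
  assert (Ea : forall n k, a n k = p n k - m n k) by (intros; unfold p, m; lra).
  assert (Hak : forall k, is_series (fun n => a n k) (Series (fun n => p n k) - Series (fun n => m n k))).
  { intros k. apply is_series_ext with (fun n => p n k - m n k).
    intros n. rewrite Ea. reflexivity. apply Ris_series_minus; apply Series_correct; auto. }
  assert (Han : forall n, is_series (a n) (Series (p n) - Series (m n))).
  { intros n. apply is_series_ext with (fun k => p n k - m n k).
    intros k. rewrite Ea. reflexivity. apply Ris_series_minus; apply Series_correct; auto. }
  split. intros k. eexists; apply Hak.
  apply is_series_ext with (fun k => Series (fun n => p n k) - Series (fun n => m n k)).
  intros k. rewrite (is_series_unique _ _ (Hak k)). reflexivity.
  replace (Series (fun n => Series (a n))) with (Series (fun n => Series (p n)) - Series (fun n => Series (m n))).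
  apply Ris_series_minus; auto.
  symmetry. apply is_series_unique.
  apply is_series_ext with (fun n => Series (p n) - Series (m n)).
  intros n. rewrite (is_series_unique _ _ (Han n)). reflexivity.
  apply Ris_series_minus; apply Series_correct; auto.
Qed.

Lemma Rabs_fst_Cmod (z : C) : Rabs (fst z) <= Cmod z.
Proof. generalize (Rmax_Cmod z). generalize (Rmax_l (Rabs (fst z)) (Rabs (snd z))). lra. Qed.
Lemma Rabs_snd_Cmod (z : C) : Rabs (snd z) <= Cmod z.
Proof. generalize (Rmax_Cmod z). generalize (Rmax_r (Rabs (fst z)) (Rabs (snd z))). lra. Qed.

Lemma CSeries_unique (a : nat -> C) l : is_series a l -> CSeries a = l.
Proof.
  intros H. apply C_is_series_split in H as [H1 H2]. unfold CSeries.
  rewrite (is_series_unique _ _ H1), (is_series_unique _ _ H2). destruct l; auto.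
Qed.

Lemma C_abs_ex (a : nat -> C) : ex_series (fun n => Cmod (a n)) -> is_series a (CSeries a).
Proof.
  intros H. apply C_is_series_split. simpl. split; apply Series_correct.
  apply ex_series_Rle with (fun n => Cmod (a n)); auto. intros; apply Rabs_fst_Cmod.
  apply ex_series_Rle with (fun n => Cmod (a n)); auto. intros; apply Rabs_snd_Cmod.
Qed.

Lemma is_series_0 : is_series (fun _ : nat => 0) 0.
Proof.
  change (is_lim_seq (sum_n (fun _ : nat => 0)) 0).
  apply is_lim_seq_ext with (fun _ => 0). 2: apply is_lim_seq_const.
  intros n. induction n. rewrite sum_O; auto. rewrite sum_Sn, <- IHn. rplus. ring.
Qed.

Lemma RtoC_is_series (b : nat -> R) l : is_series b l -> is_series (fun n => RtoC (b n)) (RtoC l).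
Proof. intros H. apply C_is_series_split. simpl. split; auto. apply is_series_0. Qed.

Lemma RtoC_is_series_inv (b : nat -> R) l : is_series (fun n => RtoC (b n)) (RtoC l) -> is_series b l.
Proof. intros H. apply C_is_series_split in H. simpl in H. tauto. Qed.

Lemma C_is_series_scal (c : C) (a : nat -> C) l : is_series a l -> is_series (fun n => (c * a n)%C) (c * l)%C.
Proof. intros H. exact (@is_series_scal C_AbsRing C_NormedModule c _ _ H). Qed.

Lemma C_is_series_plus (a b : nat -> C) la lb : is_series a la -> is_series b lb ->
  is_series (fun n => (a n + b n)%C) (la + lb)%C.
Proof. intros Ha Hb. exact (@is_series_plus C_AbsRing C_NormedModule _ _ _ _ Ha Hb). Qed.

Lemma C_is_series_unique (a : nat -> C) l1 l2 : is_series a l1 -> is_series a l2 -> l1 = l2.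
Proof. intros H1 H2. rewrite <- (CSeries_unique _ _ H1). apply CSeries_unique; auto. Qed.

Lemma C_fubini (a : nat -> nat -> C) :
  (forall n, ex_series (fun k => Cmod (a n k))) -> ex_series (fun n => Series (fun k => Cmod (a n k))) ->
  (forall k, is_series (fun n => a n k) (CSeries (fun n => a n k))) /\
  is_series (fun k => CSeries (fun n => a n k)) (CSeries (fun n => CSeries (a n))).
Proof.
  intros Hr Hc.
  assert (F1 : forall n, ex_series (fun k => Rabs (fst (a n k)))).
  { intros n. apply ex_series_Rle with (fun k => Cmod (a n k)); auto. intros k. rewrite Rabs_Rabsolu. apply Rabs_fst_Cmod. }
  assert (F2 : forall n, ex_series (fun k => Rabs (snd (a n k)))).
  { intros n. apply ex_series_Rle with (fun k => Cmod (a n k)); auto. intros k. rewrite Rabs_Rabsolu. apply Rabs_snd_Cmod. }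
  assert (G1 : ex_series (fun n => Series (fun k => Rabs (fst (a n k))))).
  { apply ex_series_Rle with (fun n => Series (fun k => Cmod (a n k))); auto. intros n.
    rewrite Rabs_pos_eq. apply Series_le; auto. intros; split. apply Rabs_pos. apply Rabs_fst_Cmod.
    apply Series_nonneg; auto. intros; apply Rabs_pos. }
  assert (G2 : ex_series (fun n => Series (fun k => Rabs (snd (a n k))))).
  { apply ex_series_Rle with (fun n => Series (fun k => Cmod (a n k))); auto. intros n.
    rewrite Rabs_pos_eq. apply Series_le; auto. intros; split. apply Rabs_pos. apply Rabs_snd_Cmod.
    apply Series_nonneg; auto. intros; apply Rabs_pos. }
  destruct (fubini (fun n k => fst (a n k)) F1 G1) as [H1k H1].
  destruct (fubini (fun n k => snd (a n k)) F2 G2) as [H2k H2].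
  split.
  - intros k. apply C_is_series_split. simpl. split; apply Series_correct; auto.
  - apply C_is_series_split. simpl. split; auto.
Qed.

Definition ex (w : C) (n : nat) : C := Cdiv (Cpow w n) (RtoC (INR (fact n))).

Lemma RtoC_neq0 (x : R) : x <> 0 -> RtoC x <> 0%C.
Proof. intros H E. apply H. injection E. auto. Qed.

Lemma fact_neq0 n : RtoC (INR (fact n)) <> 0%C.
Proof. apply RtoC_neq0. apply INR_fact_neq_0. Qed.

Lemma Cmod_ex w n : Cmod (ex w n) = Cmod w ^ n / INR (fact n).
Proof.
  unfold ex. rewrite Cmod_div. rewrite Cmod_pow, Cmod_R, Rabs_pos_eq. auto.
  apply pos_INR. apply fact_neq0.
Qed.

Lemma exp_series (x : R) : is_series (fun n => x ^ n / INR (fact n)) (exp x).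
Proof.
  generalize (is_exp_Reals x). unfold is_pseries. apply is_series_ext.
  intros n. rewrite pow_n_pow. reflexivity.
Qed.

Lemma ex_R (x : R) n : ex (RtoC x) n = RtoC (x ^ n / INR (fact n)).
Proof.
  unfold ex. rewrite RtoC_div, RtoC_pow; auto. apply INR_fact_neq_0.
Qed.

Lemma Cexp_correct (w : C) : is_series (ex w) (Cexp w).
Proof.
  change (is_series (ex w) (CSeries (ex w))). apply C_abs_ex.
  apply ex_series_ext with (fun n => Cmod w ^ n / INR (fact n)).
  intros n; symmetry; apply Cmod_ex. eexists; apply exp_series.
Qed.

Lemma Cexp_R (x : R) : Cexp (RtoC x) = RtoC (exp x).
Proof.
  apply CSeries_unique. apply is_series_ext with (fun n => RtoC (x ^ n / INR (fact n))).
  intros n; symmetry; apply ex_R. apply RtoC_is_series. apply exp_series.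
Qed.

Fixpoint csum (g : nat -> C) (n : nat) : C :=
  match n with 0%nat => g 0%nat | S m => (csum g m + g (S m))%C end.

Lemma csum_fst g n : fst (csum g n) = sum_f_R0 (fun k => fst (g k)) n.
Proof. induction n; simpl; auto. rewrite IHn; auto. Qed.
Lemma csum_snd g n : snd (csum g n) = sum_f_R0 (fun k => snd (g k)) n.
Proof. induction n; simpl; auto. rewrite IHn; auto. Qed.

Lemma csum_ext g h n : (forall i, (i <= n)%nat -> g i = h i) -> csum g n = csum h n.
Proof.
  induction n; intros H; simpl. apply H; lia. rewrite IHn. rewrite H; auto. intros; apply H; lia.
Qed.
Lemma csum_plus g h n : csum (fun i => g i + h i)%C n = (csum g n + csum h n)%C.
Proof. induction n; simpl; auto. rewrite IHn. ring. Qed.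
Lemma csum_scal c g n : csum (fun i => c * g i)%C n = (c * csum g n)%C.
Proof. induction n; simpl; auto. rewrite IHn. ring. Qed.
Lemma csum_first g n : csum g (S n) = (g 0%nat + csum (fun i => g (S i)) n)%C.
Proof. induction n; simpl; auto. simpl in IHn. rewrite IHn. ring. Qed.

Lemma ex_S w n : (RtoC (INR (S n)) * ex w (S n))%C = (w * ex w n)%C.
Proof.
  unfold ex. change (fact (S n)) with (S n * fact n)%nat. rewrite mult_INR, RtoC_mult.
  change (Cpow w (S n)) with (w * Cpow w n)%C. field. split. apply fact_neq0. apply RtoC_neq0. apply not_0_INR. lia.
Qed.

Lemma ex_0 w : ex w 0 = 1%C.
Proof. unfold ex. simpl. field. Qed.

Lemma ex_conv a b n : csum (fun i => ex a i * ex b (n - i))%C n = ex (a + b)%C n.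
Proof.
  induction n.
  - simpl. rewrite !ex_0. ring.
  - set (s := fun m => csum (fun i => ex a i * ex b (m - i))%C m) in *.
    assert (Key : (RtoC (INR (S n)) * s (S n) = (a + b) * s n)%C).
    { unfold s.
      rewrite <- csum_scal.
      rewrite (csum_ext _ (fun i => RtoC (INR i) * (ex a i * ex b (S n - i)) + RtoC (INR (S n - i)) * (ex a i * ex b (S n - i)))%C).
      2:{ intros i Hi. rewrite <- Cmult_plus_distr_r, <- RtoC_plus, <- plus_INR. f_equal. f_equal. f_equal. lia. }
      rewrite csum_plus, Cmult_plus_distr_r. f_equal.
      - rewrite csum_first. simpl INR at 1. rewrite Cmult_0_l, Cplus_0_l.
        rewrite <- csum_scal. apply csum_ext. intros i Hi. replace (S n - S i)%nat with (n - i)%nat by lia.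
        rewrite Cmult_assoc, ex_S. ring.
      - change (csum (fun i => RtoC (INR (S n - i)) * (ex a i * ex b (S n - i)))%C (S n)) with
          (csum (fun i => RtoC (INR (S n - i)) * (ex a i * ex b (S n - i)))%C n +
           RtoC (INR (S n - S n)) * (ex a (S n) * ex b (S n - S n)))%C.
        rewrite Nat.sub_diag. change (INR 0) with 0. rewrite Cmult_0_l, Cplus_0_r.
        rewrite <- csum_scal. apply csum_ext. intros i Hi. replace (S n - i)%nat with (S (n - i)) by lia.
        transitivity (ex a i * (RtoC (INR (S (n - i))) * ex b (S (n - i))))%C. ring.
        rewrite ex_S. ring. }
    fold (s (S n)). 
    assert (E := ex_S (a + b)%C n). rewrite <- IHn in E. fold (s n) in E.
    rewrite <- E in Key. 
    assert (NZ : RtoC (INR (S n)) <> 0%C) by (apply RtoC_neq0, not_0_INR; lia).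
    transitivity (/ RtoC (INR (S n)) * (RtoC (INR (S n)) * s (S n)))%C. field; auto.
    rewrite Key. field; auto.
Qed.

Lemma sum_f_R0_minus (f g : nat -> R) n : sum_f_R0 (fun i => f i - g i) n = sum_f_R0 f n - sum_f_R0 g n.
Proof. induction n; simpl; auto. rewrite IHn. ring. Qed.

Lemma ex_series_abs_ex w : ex_series (fun n => Cmod (ex w n)).
Proof.
  apply ex_series_ext with (fun n => Cmod w ^ n / INR (fact n)).
  intros n; symmetry; apply Cmod_ex. eexists; apply exp_series.
Qed.

Lemma Cexp_add a b : Cexp (a + b)%C = (Cexp a * Cexp b)%C.
Proof.
  change (CSeries (ex (a + b)%C) = (Cexp a * Cexp b)%C). apply CSeries_unique.
  destruct (proj1 (C_is_series_split _ _) (Cexp_correct a)) as [HA1 HA2].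
  destruct (proj1 (C_is_series_split _ _) (Cexp_correct b)) as [HB1 HB2].
  assert (Ea1 : ex_series (fun n => Rabs (fst (ex a n)))).
  { apply ex_series_Rle with (fun n => Cmod (ex a n)). intros; rewrite Rabs_Rabsolu; apply Rabs_fst_Cmod. apply ex_series_abs_ex. }
  assert (Ea2 : ex_series (fun n => Rabs (snd (ex a n)))).
  { apply ex_series_Rle with (fun n => Cmod (ex a n)). intros; rewrite Rabs_Rabsolu; apply Rabs_snd_Cmod. apply ex_series_abs_ex. }
  assert (Eb1 : ex_series (fun n => Rabs (fst (ex b n)))).
  { apply ex_series_Rle with (fun n => Cmod (ex b n)). intros; rewrite Rabs_Rabsolu; apply Rabs_fst_Cmod. apply ex_series_abs_ex. }
  assert (Eb2 : ex_series (fun n => Rabs (snd (ex b n)))).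
  { apply ex_series_Rle with (fun n => Cmod (ex b n)). intros; rewrite Rabs_Rabsolu; apply Rabs_snd_Cmod. apply ex_series_abs_ex. }
  apply C_is_series_split. split.
  - apply is_series_ext with (fun n => sum_f_R0 (fun k => fst (ex a k) * fst (ex b (n - k))) n -
                                        sum_f_R0 (fun k => snd (ex a k) * snd (ex b (n - k))) n).
    { intros n. rewrite <- ex_conv, csum_fst, <- sum_f_R0_minus. reflexivity. }
    replace (fst (Cexp a * Cexp b)%C) with (fst (Cexp a) * fst (Cexp b) - snd (Cexp a) * snd (Cexp b)).
    2:{ destruct (Cexp a), (Cexp b). reflexivity. }
    apply Ris_series_minus.
    apply (is_series_mult (fun k => fst (ex a k)) (fun k => fst (ex b k))); auto.
    apply (is_series_mult (fun k => snd (ex a k)) (fun k => snd (ex b k))); auto.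
  - apply is_series_ext with (fun n => sum_f_R0 (fun k => fst (ex a k) * snd (ex b (n - k))) n +
                                        sum_f_R0 (fun k => snd (ex a k) * fst (ex b (n - k))) n).
    { intros n. rewrite <- ex_conv, csum_snd, <- plus_sum. reflexivity. }
    replace (snd (Cexp a * Cexp b)%C) with (fst (Cexp a) * snd (Cexp b) + snd (Cexp a) * fst (Cexp b)).
    2:{ destruct (Cexp a), (Cexp b). reflexivity. }
    apply Ris_series_plus.
    apply (is_series_mult (fun k => fst (ex a k)) (fun k => snd (ex b k))); auto.
    apply (is_series_mult (fun k => snd (ex a k)) (fun k => fst (ex b k))); auto.
Qed.

Fixpoint Ch (mu : R) (n k : nat) : R :=
  match n with
  | 0%nat => 1
  | S m => INR k * Ch mu m (pred k) + mu * Ch mu m k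
  end.

Lemma Ch_diff mu n k : Ch mu (S n) (S k) - Ch mu (S n) k = INR (S n) * Ch mu n k.
Proof.
  revert k. induction n; intros k.
  - change (INR (S k) * 1 + mu * 1 - (INR k * 1 + mu * 1) = INR 1 * 1). rewrite S_INR. simpl. ring.
  - change (Ch mu (S (S n)) (S k)) with (INR (S k) * Ch mu (S n) k + mu * Ch mu (S n) (S k)).
    change (Ch mu (S (S n)) k) with (INR k * Ch mu (S n) (pred k) + mu * Ch mu (S n) k).
    assert (E1 := IHn k).
    assert (E2 : INR k * (Ch mu (S n) k - Ch mu (S n) (pred k)) = INR (S n) * (INR k * Ch mu n (pred k))).
    { destruct k. simpl. ring. simpl pred. rewrite IHn. ring. }
    assert (E3 : Ch mu (S n) k = INR k * Ch mu n (pred k) + mu * Ch mu n k) by reflexivity.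
    set (X := Ch mu (S n) (S k)) in *. set (Y := Ch mu (S n) k) in *. set (Yp := Ch mu (S n) (pred k)) in *.
    set (Z := Ch mu n (pred k)) in *. set (W := Ch mu n k) in *.
    assert (EX : X = Y + INR (S n) * W) by lra.
    assert (EYp : INR k * Yp = INR k * Y - INR (S n) * (INR k * Z)) by lra.
    rewrite EX, EYp, E3. rewrite !S_INR. ring.
Qed.

Lemma Ch_0 mu n : Ch mu n 0 = mu ^ n.
Proof. induction n; simpl; auto. rewrite IHn. ring. Qed.

Lemma Ch_abs mu n k : Rabs (Ch mu n k) <= Ch (Rabs mu) n k.
Proof.
  revert k. induction n; intros k; simpl. rewrite Rabs_R1; lra.
  eapply Rle_trans. apply Rabs_triang. rewrite !Rabs_mult, (Rabs_pos_eq (INR k)) by apply pos_INR.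
  apply Rplus_le_compat. apply Rmult_le_compat_l. apply pos_INR. auto.
  apply Rmult_le_compat_l. apply Rabs_pos. auto.
Qed.

Lemma Ch_nonneg mu n k : 0 <= mu -> 0 <= Ch mu n k.
Proof.
  intros Hm. revert k. induction n; intros k; simpl. lra.
  apply Rplus_le_le_0_compat; apply Rmult_le_pos; auto. apply pos_INR.
Qed.

Lemma Cpow_mult (c u : C) n : Cpow (c * u)%C n = (Cpow c n * Cpow u n)%C.
Proof. induction n; simpl. ring. rewrite IHn. ring. Qed.

Lemma ex_scal (c u : C) n : ex (c * u)%C n = (Cpow c n * ex u n)%C.
Proof. unfold ex. rewrite Cpow_mult. field. apply fact_neq0. Qed.

Lemma C_is_series_decr0 (c : nat -> C) (l : C) : c 0%nat = 0%C -> is_series (fun m => c (S m)) l -> is_series c l.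
Proof.
  intros H0 H. apply is_series_decr_1. rewrite H0.
  match goal with |- is_series _ ?x => change x with (l + - RtoC 0)%C end.
  replace (l + - RtoC 0)%C with l. auto. destruct l as [l1 l2]. unfold Cplus, Copp. simpl. f_equal; ring.
Qed.

Lemma Ch_gen mu (u : C) k :
  is_series (fun n => (RtoC (Ch mu n k) * ex u n)%C) (Cpow (1 + u) k * Cexp (RtoC mu * u))%C.
Proof.
  induction k.
  - simpl Cpow. rewrite Cmult_1_l. apply is_series_ext with (ex (RtoC mu * u)%C).
    2: apply Cexp_correct.
    intros n. rewrite ex_scal, Ch_0, RtoC_pow. auto.
  - set (c := fun n : nat => (match n with 0%nat => RtoC 0 | S m => (u * (RtoC (Ch mu m k) * ex u m))%C end : C)).
    apply is_series_ext with (fun n => (RtoC (Ch mu n k) * ex u n + c n)%C).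
    { intros n. destruct n. simpl. unfold c. ring.
      unfold c. replace (u * (RtoC (Ch mu n k) * ex u n))%C with (RtoC (Ch mu n k) * (RtoC (INR (S n)) * ex u (S n)))%C by (rewrite ex_S; ring).
      replace (Ch mu (S n) (S k)) with (Ch mu (S n) k + INR (S n) * Ch mu n k) by (rewrite <- Ch_diff; ring).
      match goal with |- ?a = ?b => change (@eq C a b) end.
      rewrite RtoC_plus, RtoC_mult. ring. }
    replace (Cpow (1 + u) (S k) * Cexp (RtoC mu * u))%C with
      (Cpow (1 + u) k * Cexp (RtoC mu * u) + u * (Cpow (1 + u) k * Cexp (RtoC mu * u)))%C
      by (simpl; ring).
    apply C_is_series_plus; auto.
    apply C_is_series_decr0. reflexivity.
    simpl. apply C_is_series_scal. auto.
Qed.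

Lemma Ch_gen_R mu (t : R) k :
  is_series (fun n => Ch mu n k * (t ^ n / INR (fact n))) ((1 + t) ^ k * exp (mu * t)).
Proof.
  apply RtoC_is_series_inv.
  apply is_series_ext with (fun n => (RtoC (Ch mu n k) * ex (RtoC t) n)%C).
  intros n. rewrite ex_R, RtoC_mult. auto.
  rewrite RtoC_mult, RtoC_pow, <- Cexp_R, RtoC_plus, RtoC_mult. apply Ch_gen.
Qed.

Definition Pw (lam : R) (k : nat) : R := exp (- lam) * (lam ^ k / INR (fact k)).

Lemma Pw_pos lam k : 0 < lam -> 0 < Pw lam k.
Proof.
  intros H. unfold Pw. apply Rmult_lt_0_compat. apply exp_pos.
  apply Rdiv_lt_0_compat. apply pow_lt; auto. apply lt_0_INR, lt_O_fact.
Qed.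

Lemma Pw_S lam k : Pw lam (S k) * INR (S k) = lam * Pw lam k.
Proof.
  unfold Pw. change (fact (S k)) with (S k * fact k)%nat. rewrite mult_INR. simpl pow.
  field. split. apply INR_fact_neq_0. apply not_0_INR; lia.
Qed.

Lemma Pw_sum lam : is_series (Pw lam) 1.
Proof.
  replace 1 with (exp (- lam) * exp lam). apply Ris_series_scal. apply exp_series.
  rewrite <- exp_plus. replace (- lam + lam) with 0 by ring. apply exp_0.
Qed.

Definition EB (g : nat -> R) := exists C B, 0 <= C /\ 1 <= B /\ forall k, Rabs (g k) <= C * B ^ k.

Lemma EB_series lam g : 0 <= lam -> EB g -> ex_series (fun k => Rabs (Pw lam k * g k)).
Proof.
  intros Hl [C [B [HC [HB Hg]]]].
  apply ex_series_Rle with (fun k => exp (- lam) * C * ((lam * B) ^ k / INR (fact k))).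
  - intros k. rewrite Rabs_Rabsolu, Rabs_mult. unfold Pw.
    rewrite Rabs_pos_eq. 2:{ apply Rmult_le_pos. left; apply exp_pos. apply Rmult_le_pos. apply pow_le; auto.
      left; apply Rinv_0_lt_compat, lt_0_INR, lt_O_fact. }
    rewrite Rpow_mult_distr. unfold Rdiv.
    assert (0 < / INR (fact k)) by (apply Rinv_0_lt_compat, lt_0_INR, lt_O_fact).
    assert (0 <= lam ^ k) by (apply pow_le; auto). assert (0 < exp (- lam)) by apply exp_pos.
    specialize (Hg k).
    replace (exp (- lam) * C * (lam ^ k * B ^ k * / INR (fact k))) with
      (exp (- lam) * (lam ^ k * / INR (fact k)) * (C * B ^ k)) by ring.
    apply Rmult_le_compat_l; auto. apply Rmult_le_pos; [lra|]. apply Rmult_le_pos; lra.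
  - eexists. apply Ris_series_scal. apply exp_series.
Qed.

Lemma EB_ex lam g : 0 <= lam -> EB g -> ex_series (fun k => Pw lam k * g k).
Proof. intros. apply ex_series_Rabs. apply EB_series; auto. Qed.

Lemma EB_const c : EB (fun _ => c).
Proof. exists (Rabs c), 1. split. apply Rabs_pos. split. lra. intros k. rewrite pow1. lra. Qed.

Lemma EB_le_pow B k m : 1 <= B -> (m <= k)%nat -> B ^ m <= B ^ k.
Proof. intros. apply Rle_pow; auto. Qed.

Lemma EB_mult g h : EB g -> EB h -> EB (fun k => g k * h k).
Proof.
  intros [C1 [B1 [HC1 [HB1 H1]]]] [C2 [B2 [HC2 [HB2 H2]]]].
  exists (C1 * C2), (B1 * B2). split. apply Rmult_le_pos; auto. split. nra.
  intros k. rewrite Rabs_mult, Rpow_mult_distr.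
  replace (C1 * C2 * (B1 ^ k * B2 ^ k)) with ((C1 * B1 ^ k) * (C2 * B2 ^ k)) by ring.
  apply Rmult_le_compat; auto; apply Rabs_pos.
Qed.

Lemma EB_plus g h : EB g -> EB h -> EB (fun k => g k + h k).
Proof.
  intros [C1 [B1 [HC1 [HB1 H1]]]] [C2 [B2 [HC2 [HB2 H2]]]].
  exists (C1 + C2), (B1 * B2). split. lra. split. nra.
  intros k. eapply Rle_trans. apply Rabs_triang.
  assert (B1 ^ k <= (B1 * B2) ^ k) by (apply pow_incr; nra).
  assert (B2 ^ k <= (B1 * B2) ^ k) by (apply pow_incr; nra).
  specialize (H1 k); specialize (H2 k). nra.
Qed.

Lemma EB_scal c g : EB g -> EB (fun k => c * g k).
Proof. intros H. apply (EB_mult (fun _ => c) g); auto. apply EB_const. Qed.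

Lemma EB_minus g h : EB g -> EB h -> EB (fun k => g k - h k).
Proof.
  intros Hg Hh. apply EB_plus with (h := fun k => - h k); auto.
  destruct Hh as [C [B [HC [HB H]]]]. exists C, B. repeat split; auto. intros k. rewrite Rabs_Ropp. auto.
Qed.

Lemma EB_shift g : EB g -> EB (fun k => g (S k)).
Proof.
  intros [C [B [HC [HB H]]]]. exists (C * B), B. split. nra. split; auto.
  intros k. specialize (H (S k)). simpl in H. lra.
Qed.

Lemma EB_pred g : EB g -> EB (fun k => g (pred k)).
Proof.
  intros [C [B [HC [HB H]]]]. exists C, B. split; auto. split; auto.
  intros k. eapply Rle_trans. apply H. apply Rmult_le_compat_l; auto. apply Rle_pow; auto. lia.
Qed.

Lemma INR_le_pow2 k : INR k <= 2 ^ k.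
Proof. induction k. simpl; lra. rewrite S_INR. simpl. assert (1 <= 2 ^ k) by (apply pow_R1_Rle; lra). lra. Qed.

Lemma EB_INR : EB INR.
Proof.
  exists 1, 2. split. lra. split. lra. intros k. rewrite Rabs_pos_eq by apply pos_INR.
  rewrite Rmult_1_l. apply INR_le_pow2.
Qed.

Lemma EB_pow g j : EB g -> EB (fun k => g k ^ j).
Proof.
  intros H. induction j. simpl. apply EB_const.
  simpl. apply (EB_mult g (fun k => g k ^ j)); auto.
Qed.

Lemma EB_Ch mu n : EB (Ch mu n).
Proof.
  induction n. apply EB_const. simpl.
  apply (EB_plus (fun k => INR k * Ch mu n (pred k)) (fun k => mu * Ch mu n k)).
  apply (EB_mult INR (fun k => Ch mu n (pred k))). apply EB_INR. apply (EB_pred (Ch mu n)); auto.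
  apply EB_scal; auto.
Qed.

Lemma EB_ext g h : (forall k, g k = h k) -> EB g -> EB h.
Proof. intros E [C [B [HC [HB H]]]]. exists C, B. repeat split; auto. intros k; rewrite <- E; auto. Qed.

Definition Df (g : nat -> R) : nat -> R := fun k => g (S k) - g k.
Fixpoint iterD (n : nat) (g : nat -> R) : nat -> R :=
  match n with 0%nat => g | S m => iterD m (Df g) end.

Lemma iterD_ext n g h : (forall k, g k = h k) -> forall k, iterD n g k = iterD n h k.
Proof.
  revert g h. induction n; intros g h E k; simpl; auto.
  apply IHn. intros j. unfold Df. rewrite !E. auto.
Qed.

Lemma iterD_lin n a b g h k : iterD n (fun k => a * g k + b * h k) k = a * iterD n g k + b * iterD n h k.
Proof.
  revert g h k. induction n; intros g h k; simpl; auto.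
  rewrite <- IHn. apply iterD_ext. intros j. unfold Df. ring.
Qed.

Lemma iterD_shift n g k : iterD n (fun k => g (S k)) k = iterD n g (S k).
Proof.
  revert g k. induction n; intros g k; simpl; auto.
  rewrite <- IHn. apply iterD_ext. intros j. unfold Df. auto.
Qed.

Lemma iterD_S' n g k : iterD (S n) g k = iterD n g (S k) - iterD n g k.
Proof.
  revert g k. induction n; intros g k. simpl. auto.
  change (iterD (S (S n)) g k) with (iterD (S n) (Df g) k). rewrite IHn. simpl. auto.
Qed.

Lemma iterD_const n c k : iterD (S n) (fun _ => c) k = 0.
Proof.
  rewrite (iterD_ext (S n) (fun _ => c) (fun k => c * 1 + 0 * 1)) by (intros; ring).
  revert k. induction n; intros k. simpl. unfold Df. ring.
  rewrite iterD_S'. rewrite !IHn. ring.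
Qed.

Lemma iterD_zero_up d e g : (forall k, iterD d g k = 0) -> (d <= e)%nat -> forall k, iterD e g k = 0.
Proof.
  intros H Hde. induction Hde; auto. intros k. rewrite iterD_S', !IHHde. ring.
Qed.

Lemma iterD_const_next d g L : (forall k, iterD d g k = L) -> forall k, iterD (S d) g k = 0.
Proof. intros H k. rewrite iterD_S', !H. ring. Qed.

Lemma iterD_mult_INR d g L : (forall k, iterD d g k = L) ->
  forall k, iterD (S d) (fun k => INR k * g k) k = INR (S d) * L.
Proof.
  revert g L. induction d; intros g L H k.
  - simpl in H. simpl. unfold Df. rewrite !H, S_INR. simpl. ring.
  - change (iterD (S (S d)) (fun k => INR k * g k) k) with (iterD (S d) (Df (fun k => INR k * g k)) k).
    rewrite (iterD_ext (S d) _ (fun k => 1 * (INR k * Df g k) + 1 * g (S k))).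
    2:{ intros j. unfold Df. rewrite S_INR. ring. }
    rewrite iterD_lin. rewrite (IHd (Df g) L). 2:{ intros j. apply H. }
    rewrite iterD_shift, H. rewrite (S_INR (S d)). ring.
Qed.

Lemma iterD_pow_INR j : forall k, iterD j (fun k => INR k ^ j) k = INR (fact j).
Proof.
  induction j; intros k. simpl. auto.
  rewrite (iterD_ext (S j) _ (fun k => INR k * INR k ^ j)) by (intros; simpl; ring).
  rewrite (iterD_mult_INR j _ (INR (fact j))); auto.
  change (fact (S j)) with (S j * fact j)%nat. rewrite mult_INR. auto.
Qed.

Lemma iterD_Ch mu n : forall k, iterD n (Ch mu n) k = INR (fact n).
Proof.
  induction n; intros k. simpl. auto.
  change (iterD (S n) (Ch mu (S n)) k) with (iterD n (Df (Ch mu (S n))) k).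
  rewrite (iterD_ext n _ (fun k => INR (S n) * Ch mu n k + 0 * Ch mu n k)).
  2:{ intros j. unfold Df. rewrite Ch_diff. ring. }
  rewrite iterD_lin, IHn. change (fact (S n)) with (S n * fact n)%nat. rewrite mult_INR. ring.
Qed.

Ltac req := match goal with |- ?a = ?b => change (@eq R a b) end.

Lemma R_is_series_decr0 (c : nat -> R) (l : R) : c 0%nat = 0 -> is_series (fun m => c (S m)) l -> is_series c l.
Proof.
  intros H0 H. apply is_series_decr_1. rewrite H0.
  match goal with |- is_series _ ?x => change x with (l + - 0) end.
  replace (l + - 0) with l. auto. change (@eq R l (l + - 0)). ring.
Qed.

Lemma orth_step lam n g : 0 < lam -> EB g ->
  is_series (fun k => Pw lam k * Ch (- lam) (S n) k * g k)
            (lam * Series (fun k => Pw lam k * Ch (- lam) n k * Df g k)).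
Proof.
  intros Hl Hg.
  set (a := fun k => Pw lam k * INR k * Ch (- lam) n (pred k) * g k).
  set (b := fun k => Pw lam k * Ch (- lam) n k * g k).
  set (b1 := fun k => Pw lam k * Ch (- lam) n k * g (S k)).
  assert (Eb : ex_series b).
  { apply ex_series_ext with (fun k => Pw lam k * (Ch (- lam) n k * g k)). intros; unfold b; req; ring.
    apply EB_ex. lra. apply (EB_mult (Ch (- lam) n) g); auto. apply EB_Ch. }
  assert (Eb1 : ex_series b1).
  { apply ex_series_ext with (fun k => Pw lam k * (Ch (- lam) n k * g (S k))). intros; unfold b1; req; ring.
    apply EB_ex. lra. apply (EB_mult (Ch (- lam) n) (fun k => g (S k))); auto. apply EB_Ch. apply EB_shift; auto. }
  assert (Ha : is_series a (lam * Series b1)).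
  { apply R_is_series_decr0. unfold a. simpl. ring.
    apply is_series_ext with (fun k => lam * b1 k).
    { intros k. unfold a, b1. simpl pred. req. rewrite Pw_S. ring. }
    apply Ris_series_scal. apply Series_correct; auto. }
  assert (Hd : Series (fun k => Pw lam k * Ch (- lam) n k * Df g k) = Series b1 - Series b).
  { apply is_series_unique. apply is_series_ext with (fun k => b1 k - b k).
    intros k; unfold b1, b, Df; req; ring. apply Ris_series_minus; apply Series_correct; auto. }
  rewrite Hd.
  apply is_series_ext with (fun k => a k - lam * b k).
  { intros k. unfold a, b. simpl Ch. req; ring. }
  replace (lam * (Series b1 - Series b)) with (lam * Series b1 - lam * Series b) by ring.
  apply Ris_series_minus; auto. apply Ris_series_scal. apply Series_correct; auto.
Qed.

Lemma EB_iterD n g : EB g -> EB (iterD n g).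
Proof.
  revert g. induction n; intros g H; simpl; auto. apply IHn.
  unfold Df. apply (EB_minus (fun k => g (S k)) g); auto. apply EB_shift; auto.
Qed.

Lemma orth lam n g : 0 < lam -> EB g ->
  is_series (fun k => Pw lam k * Ch (- lam) n k * g k) (lam ^ n * Series (fun k => Pw lam k * iterD n g k)).
Proof.
  intros Hl. revert g. induction n; intros g Hg.
  - simpl. rewrite Rmult_1_l. apply is_series_ext with (fun k => Pw lam k * g k). intros; req; ring.
    apply Series_correct. apply EB_ex; auto. lra.
  - assert (Hdg : EB (Df g)). { unfold Df. apply (EB_minus (fun k => g (S k)) g); auto. apply EB_shift; auto. }
    generalize (orth_step lam n g Hl Hg).
    rewrite (is_series_unique _ _ (IHn (Df g) Hdg)). simpl. rewrite Rmult_assoc. auto.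
Qed.

Lemma ortho_zero lam n g : 0 < lam -> EB g -> (forall k, iterD n g k = 0) ->
  is_series (fun k => Pw lam k * Ch (- lam) n k * g k) 0.
Proof.
  intros Hl Hg H. replace 0 with (lam ^ n * Series (fun k => Pw lam k * iterD n g k)).
  apply orth; auto.
  rewrite (Series_ext _ (fun _ => 0)). rewrite (is_series_unique _ _ is_series_0). ring. intros k; rewrite H; ring.
Qed.

Lemma ortho_norm lam n : 0 < lam ->
  is_series (fun k => Pw lam k * Ch (- lam) n k * Ch (- lam) n k) (lam ^ n * INR (fact n)).
Proof.
  intros Hl. replace (lam ^ n * INR (fact n)) with (lam ^ n * Series (fun k => Pw lam k * iterD n (Ch (- lam) n) k)).
  apply orth; auto. apply EB_Ch.
  f_equal. rewrite (Series_ext _ (fun k => INR (fact n) * Pw lam k)). rewrite Series_scal_l.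
  rewrite (is_series_unique _ _ (Pw_sum lam)). ring. intros k. rewrite iterD_Ch. ring.
Qed.

Fixpoint lsum (n : nat) (f : nat -> R) : R :=
  match n with 0%nat => 0 | S m => lsum m f + f m end.

Lemma lsum_ext n f g : (forall m, (m < n)%nat -> f m = g m) -> lsum n f = lsum n g.
Proof. induction n; intros H; simpl; auto. rewrite IHn, H; auto; intros; try apply H; lia. Qed.

Lemma lsum_scal n x f : x * lsum n f = lsum n (fun m => x * f m).
Proof. induction n; simpl. ring. rewrite <- IHn. ring. Qed.

Lemma lsum_series n (f : nat -> nat -> R) : (forall m, (m < n)%nat -> is_series (f m) 0) ->
  is_series (fun k => lsum n (fun m => f m k)) 0.
Proof.
  induction n; intros H; simpl. apply is_series_0.
  replace 0 with (0 + 0) by ring. apply Ris_series_plus. apply IHn; intros; apply H; lia. apply H; lia.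
Qed.

Lemma span mu n g : (forall k, iterD n g k = 0) -> exists b : nat -> R, forall k, g k = lsum n (fun m => b m * Ch mu m k).
Proof.
  revert g. induction n; intros g H.
  - exists (fun _ => 0). intros k. simpl. apply (H k).
  - set (L := iterD n g 0).
    assert (HL : forall k, iterD n g k = L).
    { induction k; auto. assert (E := iterD_S' n g k). rewrite H in E. lra. }
    set (h := fun k => 1 * g k + (- (L / INR (fact n))) * Ch mu n k).
    assert (Hh : forall k, iterD n h k = 0).
    { intros k. unfold h. rewrite iterD_lin, HL, iterD_Ch. field. apply INR_fact_neq_0. }
    destruct (IHn h Hh) as [b' Hb'].
    exists (fun m => if Nat.eqb m n then L / INR (fact n) else b' m).
    intros k. simpl. rewrite Nat.eqb_refl.
    rewrite (lsum_ext n _ (fun m => b' m * Ch mu m k)).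
    2:{ intros m Hm. assert (Nat.eqb m n = false) by (apply Nat.eqb_neq; lia). rewrite H0. auto. }
    rewrite <- Hb'. unfold h. ring.
Qed.

Lemma series_nonneg_zero (b : nat -> R) : (forall k, 0 <= b k) -> is_series b 0 -> forall k, b k = 0.
Proof.
  intros Hp Hb k. apply Rle_antisym; auto.
  eapply Rle_trans. apply (term_le_partial b k); auto. apply partial_le_limit; auto.
Qed.

Lemma identify (alpha lam : R) (c : nat -> nat -> R) :
  0 < alpha -> 0 < lam ->
  (forall n k, iterD n (c n) k = alpha ^ n * INR (fact n)) ->
  (forall n, EB (c n)) ->
  (forall n m, n <> m -> is_series (fun k => Pw lam k * (c n k * c m k)) 0) ->
  forall n k, c n k = alpha ^ n * Ch (- lam) n k.
Proof.
  intros Ha Hl Hit HEB Hor n. induction n as [n IH] using lt_wf_ind.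
  set (d := fun k => 1 * c n k + (- alpha ^ n) * Ch (- lam) n k).
  assert (Hd0 : forall k, iterD n d k = 0).
  { intros k. unfold d. rewrite iterD_lin, Hit, iterD_Ch. ring. }
  assert (HdEB : EB d).
  { unfold d. apply (EB_plus (fun k => 1 * c n k) (fun k => - alpha ^ n * Ch (- lam) n k)); apply EB_scal; auto. apply EB_Ch. }
  destruct (span (- lam) n d Hd0) as [b Hb].
  assert (S1 : is_series (fun k => Pw lam k * c n k * d k) 0).
  { apply is_series_ext with (fun k => lsum n (fun m => (b m / alpha ^ m) * (Pw lam k * (c n k * c m k)))).
    { intros k. rewrite Hb. rewrite lsum_scal. apply lsum_ext. intros m Hm.
      rewrite (IH m Hm k). req. field. apply pow_nonzero. lra. }
    apply lsum_series. intros m Hm. replace 0 with (b m / alpha ^ m * 0) by ring.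
    apply Ris_series_scal. apply Hor. lia. }
  assert (S2 : is_series (fun k => Pw lam k * Ch (- lam) n k * d k) 0).
  { apply ortho_zero; auto. }
  assert (S3 : is_series (fun k => Pw lam k * d k * d k) 0).
  { apply is_series_ext with (fun k => Pw lam k * c n k * d k - alpha ^ n * (Pw lam k * Ch (- lam) n k * d k)).
    { intros k. req. unfold d at 3. ring. }
    replace 0 with (0 - alpha ^ n * 0) by ring. apply Ris_series_minus; auto. apply Ris_series_scal; auto. }
  assert (Hnn : forall k, 0 <= Pw lam k * d k * d k).
  { intros k. assert (0 < Pw lam k) by (apply Pw_pos; auto).
    rewrite Rmult_assoc; apply Rmult_le_pos; [lra | apply Rle_0_sqr]. }
  intros k. assert (Z := series_nonneg_zero _ Hnn S3 k).
  assert (0 < Pw lam k) by (apply Pw_pos; auto).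
  assert (d k = 0).
  { cbv beta in Z. rewrite Rmult_assoc in Z. apply Rmult_integral in Z. destruct Z as [Z|Z]. lra. apply Rmult_integral in Z. tauto. }
  unfold d in H0. lra.
Qed.

Lemma pi_mass_R alpha s k : 0 < alpha ->
  pi_mass alpha (RtoC s) k = RtoC (Pw (s / alpha ^ 2) k).
Proof.
  intros Ha. unfold pi_mass, Pw. assert (alpha ^ 2 <> 0) by (apply pow_nonzero; lra).
  rewrite <- RtoC_div by auto. rewrite <- RtoC_opp, Cexp_R.
  fold (ex (RtoC (s / alpha ^ 2)) k). rewrite ex_R, RtoC_mult. auto.
Qed.

Section Poly.
Variable alpha : R.
Variable a : nat -> nat -> R.

Definition cc (n k : nat) : R := monic_poly a n (alpha * INR k).

Lemma iterD_mono j : forall k, iterD j (fun k => (alpha * INR k) ^ j) k = alpha ^ j * INR (fact j).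
Proof.
  intros k. rewrite (iterD_ext j _ (fun k => alpha ^ j * INR k ^ j + 0 * INR k ^ j)).
  rewrite iterD_lin, iterD_pow_INR. ring. intros; rewrite Rpow_mult_distr; ring.
Qed.

Lemma EB_mono j : EB (fun k => (alpha * INR k) ^ j).
Proof. apply (EB_pow (fun k => alpha * INR k)). apply EB_scal. apply EB_INR. Qed.

Definition FL (n : nat) (l : list nat) (k : nat) : R :=
  fold_right Rplus 0 (map (fun j => a n j * (alpha * INR k) ^ j) l).

Lemma FL_iterD n l : (forall j, In j l -> (j < n)%nat) -> forall k, iterD n (FL n l) k = 0.
Proof.
  induction l; intros H k.
  - unfold FL. simpl. destruct n. simpl. auto.
    apply iterD_const.
  - unfold FL. simpl.
    rewrite (iterD_ext n _ (fun k => a n a0 * (alpha * INR k) ^ a0 + 1 * FL n l k)) by (intros; unfold FL; ring).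
    rewrite iterD_lin. rewrite IHl. 2:{ intros; apply H; simpl; auto. }
    rewrite (iterD_zero_up (S a0) n (fun k => (alpha * INR k) ^ a0)). ring.
    apply iterD_const_next with (alpha ^ a0 * INR (fact a0)). apply iterD_mono.
    apply H; simpl; auto.
Qed.

Lemma FL_EB n l : EB (FL n l).
Proof.
  induction l. unfold FL; simpl. apply EB_const.
  apply EB_ext with (fun k => a n a0 * (alpha * INR k) ^ a0 + FL n l k).
  intros; unfold FL; simpl; auto.
  apply (EB_plus (fun k => a n a0 * (alpha * INR k) ^ a0) (FL n l)); auto. apply EB_scal. apply EB_mono.
Qed.

Lemma cc_iterD n k : iterD n (cc n) k = alpha ^ n * INR (fact n).
Proof.
  rewrite (iterD_ext n _ (fun k => 1 * (alpha * INR k) ^ n + 1 * FL n (seq 0 n) k)).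
  rewrite iterD_lin, iterD_mono, FL_iterD. ring.
  intros j Hj. apply in_seq in Hj. lia.
  intros j. unfold cc, monic_poly, FL. ring.
Qed.

Lemma cc_EB n : EB (cc n).
Proof.
  apply EB_ext with (fun k => (alpha * INR k) ^ n + FL n (seq 0 n) k).
  intros; unfold cc, monic_poly, FL; auto.
  apply (EB_plus (fun k => (alpha * INR k) ^ n) (FL n (seq 0 n))). apply EB_mono. apply FL_EB.
Qed.

End Poly.

Lemma identify_main alpha sigma a : 0 < alpha -> 0 < sigma ->
  orthogonal_wrt alpha sigma (monic_poly a) ->
  forall n k, monic_poly a n (alpha * INR k) = alpha ^ n * Ch (- (sigma / alpha ^ 2)) n k.
Proof.
  intros Ha Hs Hor.
  assert (Hl : 0 < sigma / alpha ^ 2) by (apply Rdiv_lt_0_compat; auto; apply pow_lt; auto).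
  apply (identify alpha (sigma / alpha ^ 2) (cc alpha a) Ha Hl).
  - apply cc_iterD.
  - apply cc_EB.
  - intros n m Hnm. apply RtoC_is_series_inv. generalize (Hor n m Hnm). apply is_series_ext.
    intros k. rewrite pi_mass_R by auto. unfold cc. rewrite <- RtoC_mult. f_equal. ring.
Qed.

Lemma abs_conv (f : nat -> C) lam r : 0 < lam -> 0 <= r ->
  ex_series (fun k => Cmod (f k) ^ 2 * Pw lam k) ->
  ex_series (fun k => Cmod (f k) * (r ^ k / INR (fact k))).
Proof.
  intros Hl Hr Hf. set (B := r / lam).
  apply ex_series_Rle with (fun k => exp lam / 2 * (Cmod (f k) ^ 2 * Pw lam k + exp (- lam) * ((lam * B ^ 2) ^ k / INR (fact k)))).
  - intros k. set (x := Cmod (f k)). set (q := lam ^ k / INR (fact k)). set (y := B ^ k).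
    assert (Hx : 0 <= x) by apply Cmod_ge_0.
    assert (Hq : 0 < q) by (apply Rdiv_lt_0_compat; [apply pow_lt; auto | apply lt_0_INR, lt_O_fact]).
    assert (E1 : r ^ k / INR (fact k) = q * y).
    { assert (Er : r ^ k = lam ^ k * y). { unfold y, B. rewrite <- Rpow_mult_distr. f_equal. field. lra. }
      rewrite Er. unfold q. field. apply INR_fact_neq_0. }
    assert (E2 : (lam * B ^ 2) ^ k / INR (fact k) = q * (y * y)).
    { unfold q, y. rewrite Rpow_mult_distr, <- pow_mult, Nat.mul_comm, pow_mult. simpl pow. field. apply INR_fact_neq_0. }
    assert (E3 : Pw lam k = exp (- lam) * q) by reflexivity.
    assert (E4 : exp lam * exp (- lam) = 1) by (rewrite <- exp_plus; replace (lam + - lam) with 0 by ring; apply exp_0).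
    assert (Hy : 0 <= y) by (unfold y, B; apply pow_le; apply Rdiv_le_0_compat; lra).
    rewrite E1, E2, E3. rewrite Rabs_pos_eq. 2:{ apply Rmult_le_pos; auto. apply Rmult_le_pos; lra. }
    replace (exp lam / 2 * (x ^ 2 * (exp (- lam) * q) + exp (- lam) * (q * (y * y)))) with
      ((exp lam * exp (- lam)) * (q * (x * x + y * y) / 2)) by (simpl; field).
    rewrite E4. assert (0 <= (x - y) * (x - y)) by apply Rle_0_sqr. nra.
  - apply ex_series_ext with (fun k => exp lam / 2 * (Cmod (f k) ^ 2 * Pw lam k) + exp lam / 2 * (exp (- lam) * ((lam * B ^ 2) ^ k / INR (fact k)))).
    intros; req; ring.
    destruct Hf as [l Hl'].
    eexists. apply Ris_series_plus; apply Ris_series_scal. eauto. apply Ris_series_scal. apply exp_series.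
Qed.

Lemma abs_conv_EB (f : nat -> C) lam g : 0 < lam -> EB g ->
  ex_series (fun k => Cmod (f k) ^ 2 * Pw lam k) ->
  ex_series (fun k => Cmod (f k) * (Pw lam k * Rabs (g k))).
Proof.
  intros Hl [C0 [B [HC [HB Hg]]]] Hf.
  apply ex_series_Rle with (fun k => exp (- lam) * C0 * (Cmod (f k) * ((lam * B) ^ k / INR (fact k)))).
  - intros k. rewrite Rabs_pos_eq.
    2:{ apply Rmult_le_pos. apply Cmod_ge_0. apply Rmult_le_pos. left; apply Pw_pos; auto. apply Rabs_pos. }
    unfold Pw. rewrite Rpow_mult_distr.
    assert (0 <= Cmod (f k)) by apply Cmod_ge_0.
    assert (0 < lam ^ k / INR (fact k)) by (apply Rdiv_lt_0_compat; [apply pow_lt; auto | apply lt_0_INR, lt_O_fact]).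
    assert (0 < exp (- lam)) by apply exp_pos. specialize (Hg k).
    replace (exp (- lam) * C0 * (Cmod (f k) * (lam ^ k * B ^ k / INR (fact k)))) with
      (Cmod (f k) * (exp (- lam) * (lam ^ k / INR (fact k))) * (C0 * B ^ k)) by (field; apply INR_fact_neq_0).
    rewrite <- Rmult_assoc. apply Rmult_le_compat_l; auto. apply Rmult_le_pos; auto. apply Rmult_le_pos; lra.
  - apply ex_series_ext with (fun k => (exp (- lam) * C0) * (Cmod (f k) * ((lam * B) ^ k / INR (fact k)))).
    intros; req; ring. assert (HBl : 0 <= lam * B) by nra. destruct (abs_conv f lam (lam * B) Hl HBl Hf) as [l Hl'].
    eexists. apply Ris_series_scal. eauto.
Qed.

Lemma Cmod_le_sum (z : C) : Cmod z <= 2 * Rmax (Rabs (fst z)) (Rabs (snd z)).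
Proof.
  eapply Rle_trans. apply Cmod_2Rmax. apply Rmult_le_compat_r.
  apply Rle_trans with (Rabs (fst z)). apply Rabs_pos. apply Rmax_l.
  apply Rsqr_incr_0_var. rewrite Rsqr_sqrt by lra. unfold Rsqr. lra. lra.
Qed.

Lemma R_tail (a m : nat -> R) n : (forall k, Rabs (a k) <= m k) -> ex_series m ->
  Rabs (Series a - sum_n a n) <= Series m - sum_n m n.
Proof.
  intros Hb Hm.
  assert (Ha : ex_series a) by (apply ex_series_Rle with m; auto).
  assert (Ta : Series a - sum_n a n = Series (fun k => a (S n + k)%nat)).
  { rewrite (Series_incr_n a (S n)); auto. 2: lia. simpl pred. rewrite sum_n_Reals. ring. }
  assert (Tm : Series m - sum_n m n = Series (fun k => m (S n + k)%nat)).
  { rewrite (Series_incr_n m (S n)); auto. 2: lia. simpl pred. rewrite sum_n_Reals. ring. }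
  assert (Em : ex_series (fun k => m (S n + k)%nat)).
  { apply ex_series_incr_n. auto. }
  rewrite Ta, Tm. eapply Rle_trans. apply Series_Rabs.
  apply ex_series_Rle with (fun k => m (S n + k)%nat); auto. intros; rewrite Rabs_Rabsolu; auto.
  apply Series_le; auto. intros; split; auto. apply Rabs_pos.
Qed.

Lemma C_tail (a : nat -> C) (m : nat -> R) n : (forall k, Cmod (a k) <= m k) -> ex_series m ->
  Cmod (Cminus (CSeries a) (sum_n a n)) <= 2 * (Series m - sum_n m n).
Proof.
  intros Hb Hm. eapply Rle_trans. apply Cmod_le_sum. apply Rmult_le_compat_l. lra.
  apply Rmax_lub.
  - replace (fst (Cminus (CSeries a) (sum_n a n))) with (Series (fun k => fst (a k)) - sum_n (fun k => fst (a k)) n).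
    apply R_tail; auto. intros k; eapply Rle_trans. apply Rabs_fst_Cmod. auto.
    rewrite <- sum_n_fst. reflexivity.
  - replace (snd (Cminus (CSeries a) (sum_n a n))) with (Series (fun k => snd (a k)) - sum_n (fun k => snd (a k)) n).
    apply R_tail; auto. intros k; eapply Rle_trans. apply Rabs_snd_Cmod. auto.
    rewrite <- sum_n_snd. reflexivity.
Qed.

Lemma CSeries_ext (a b : nat -> C) : (forall n, a n = b n) -> CSeries a = CSeries b.
Proof. intros H. unfold CSeries. rewrite (Series_ext _ (fun n => fst (b n))), (Series_ext (fun n => snd (a n)) (fun n => snd (b n))); auto; intros; rewrite H; auto. Qed.

Lemma RtoC_neq0' x : x <> 0 -> RtoC x <> 0%C.
Proof. apply RtoC_neq0. Qed.

Lemma Wexpr alpha sigma (z : C) : 0 < alpha -> 0 < sigma ->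
  Cdiv (Cplus (RtoC sigma) (Cmult (RtoC alpha) z)) (RtoC (alpha ^ 2)) =
  (RtoC (sigma / alpha ^ 2) * (1 + RtoC (alpha / sigma) * z))%C.
Proof.
  intros Ha Hs. rewrite !RtoC_div by (try apply pow_nonzero; lra).
  rewrite !RtoC_pow.
  field. split; apply RtoC_neq0; lra.
Qed.

Lemma Cmod_w alpha sigma (z : C) : 0 < alpha -> 0 < sigma ->
  Cmod (Cdiv (Cplus (RtoC sigma) (Cmult (RtoC alpha) z)) (RtoC (alpha ^ 2))) <= sigma / alpha ^ 2 + Cmod z / alpha.
Proof.
  intros Ha Hs. assert (0 < alpha ^ 2) by (apply pow_lt; auto).
  rewrite Cmod_div. 2: apply RtoC_neq0; lra.
  rewrite (Cmod_R (alpha ^ 2)), Rabs_pos_eq by lra.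
  apply Rle_trans with ((sigma + alpha * Cmod z) / alpha ^ 2).
  apply Rmult_le_compat_r. left; apply Rinv_0_lt_compat; auto.
  eapply Rle_trans. apply Cmod_triangle. rewrite Cmod_mult, !Cmod_R, !Rabs_pos_eq by lra. lra.
  right. field. lra.
Qed.

Lemma Cmod_rhs alpha sigma f z n :
  Cmod (rhs_term alpha sigma f z n) =
  Cmod (f n) * (Cmod (Cdiv (Cplus (RtoC sigma) (Cmult (RtoC alpha) z)) (RtoC (alpha ^ 2))) ^ n / INR (fact n)).
Proof.
  unfold rhs_term. cbv zeta. rewrite Cmod_mult. f_equal. fold (ex (Cdiv (Cplus (RtoC sigma) (Cmult (RtoC alpha) z)) (RtoC (alpha ^ 2))) n).
  apply Cmod_ex.
Qed.

Lemma part3 alpha sigma : 0 < alpha -> 0 < sigma ->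
  forall x : R, - sigma / alpha < x ->
        (forall k, snd (pi_mass alpha (RtoC (sigma + alpha * x)) k) = 0
                   /\ 0 <= fst (pi_mass alpha (RtoC (sigma + alpha * x)) k))
        /\ is_series (pi_mass alpha (RtoC (sigma + alpha * x))) (RtoC 1).
Proof.
  intros Ha Hs x Hx.
  assert (Hp : 0 < sigma + alpha * x).
  { apply Rmult_lt_compat_l with (r := alpha) in Hx; auto.
    replace (alpha * (- sigma / alpha)) with (- sigma) in Hx by (field; lra). lra. }
  assert (Hl : 0 < (sigma + alpha * x) / alpha ^ 2) by (apply Rdiv_lt_0_compat; auto; apply pow_lt; auto).
  split.
  - intros k. rewrite pi_mass_R by auto. simpl. split; auto. left; apply Pw_pos; auto.
  - apply is_series_ext with (fun k => RtoC (Pw ((sigma + alpha * x) / alpha ^ 2) k)).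
    intros k; rewrite pi_mass_R; auto. apply RtoC_is_series. apply Pw_sum.
Qed.

Lemma part4 alpha sigma f : 0 < alpha -> 0 < sigma -> in_L2 alpha sigma f ->
  forall z : C, ex_series (fun n => Cmod (rhs_term alpha sigma f z n)).
Proof.
  intros Ha Hs Hf z.
  assert (Hl : 0 < sigma / alpha ^ 2) by (apply Rdiv_lt_0_compat; auto; apply pow_lt; auto).
  assert (Hf2 : ex_series (fun k => Cmod (f k) ^ 2 * Pw (sigma / alpha ^ 2) k)).
  { revert Hf. unfold in_L2. apply ex_series_ext. intros k. rewrite pi_mass_R; auto. }
  apply ex_series_ext with (fun n => Cmod (f n) * (Cmod (Cdiv (Cplus (RtoC sigma) (Cmult (RtoC alpha) z)) (RtoC (alpha ^ 2))) ^ n / INR (fact n))).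
  intros n; rewrite Cmod_rhs; auto.
  apply abs_conv with (sigma / alpha ^ 2); auto. apply Cmod_ge_0.
Qed.

Lemma part5 alpha sigma f : 0 < alpha -> 0 < sigma -> in_L2 alpha sigma f ->
  forall r eps : R, 0 < eps ->
        exists N : nat, forall (n : nat) (z : Complex.C), (N <= n)%nat -> Cmod z <= r ->
          Cmod (Cminus (CSeries (rhs_term alpha sigma f z))
                       (sum_n (rhs_term alpha sigma f z) n)) < eps.
Proof.
  intros Ha Hs Hf r eps He.
  assert (Hl : 0 < sigma / alpha ^ 2) by (apply Rdiv_lt_0_compat; auto; apply pow_lt; auto).
  assert (Hf2 : ex_series (fun k => Cmod (f k) ^ 2 * Pw (sigma / alpha ^ 2) k)).
  { revert Hf. unfold in_L2. apply ex_series_ext. intros k. rewrite pi_mass_R; auto. }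
  set (W := sigma / alpha ^ 2 + Rabs r / alpha).
  assert (HW : 0 <= W). { unfold W. assert (0 <= Rabs r / alpha) by (apply Rdiv_le_0_compat; [apply Rabs_pos|lra]). lra. }
  set (m := fun k => Cmod (f k) * (W ^ k / INR (fact k))).
  assert (Hm : ex_series m) by (apply abs_conv with (sigma / alpha ^ 2); auto).
  assert (Hc := Series_correct _ Hm).
  assert (He2 : 0 < eps / 2) by lra.
  destruct (proj1 (filterlim_locally _ _) Hc (mkposreal _ He2)) as [N HN].
  exists N. intros n z Hn Hz.
  eapply Rle_lt_trans. apply (C_tail _ m). 2: auto.
  - intros k. rewrite Cmod_rhs. unfold m. apply Rmult_le_compat_l. apply Cmod_ge_0.
    apply Rmult_le_compat_r. left; apply Rinv_0_lt_compat, lt_0_INR, lt_O_fact.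
    apply pow_incr. split. apply Cmod_ge_0. eapply Rle_trans. apply Cmod_w; auto.
    unfold W. apply Rplus_le_compat_l. apply Rmult_le_compat_r. left; apply Rinv_0_lt_compat; auto.
    eapply Rle_trans. apply Hz. apply Rle_abs.
  - specialize (HN n Hn). change (Rabs (sum_n m n - Series m) < eps / 2) in HN.
    rewrite Rabs_minus_sym in HN. generalize (Rle_abs (Series m - sum_n m n)). lra.
Qed.

Lemma part12 (alpha sigma : R) (a : nat -> nat -> R)
  (halpha : 0 < alpha) (hsigma : 0 < sigma)
  (horth : orthogonal_wrt alpha sigma (monic_poly a))
  (f : nat -> Complex.C) (hf : in_L2 alpha sigma f) (z : C) :
  SB_transform alpha sigma (monic_poly a) f z =
        Cmult (Cexp (Copp (Cdiv (Cplus (RtoC sigma) (Cmult (RtoC alpha) z))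
                                (RtoC (alpha ^ 2)))))
              (CSeries (rhs_term alpha sigma f z)).
Proof.
  set (lam := sigma / alpha ^ 2).
  assert (Hl : 0 < lam) by (apply Rdiv_lt_0_compat; auto; apply pow_lt; auto).
  assert (Hcn := identify_main alpha sigma a halpha hsigma horth). fold lam in Hcn.
  assert (Hp : forall k, pi_mass alpha (RtoC sigma) k = RtoC (Pw lam k)) by (intros; apply pi_mass_R; auto).
  assert (Hf2 : ex_series (fun k => Cmod (f k) ^ 2 * Pw lam k)).
  { revert hf. unfold in_L2. apply ex_series_ext. intros k. rewrite Hp; auto. }
  set (c := fun n k => monic_poly a n (alpha * INR k)).
  assert (Hden : forall n, CSeries (fun k => Cmult (RtoC (c n k ^ 2)) (pi_mass alpha (RtoC sigma) k))
                           = RtoC (sigma ^ n * INR (fact n))).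
  { intros n. apply CSeries_unique.
    apply is_series_ext with (fun k => RtoC (alpha ^ n * alpha ^ n * (Pw lam k * Ch (- lam) n k * Ch (- lam) n k))).
    { intros k. rewrite Hp. unfold c. rewrite Hcn, <- RtoC_mult. f_equal. req. ring. }
    replace (sigma ^ n * INR (fact n)) with (alpha ^ n * alpha ^ n * (lam ^ n * INR (fact n))).
    apply RtoC_is_series, Ris_series_scal, ortho_norm; auto.
    assert (Es : sigma = alpha * alpha * lam) by (unfold lam; field; lra).
    rewrite Es. rewrite !Rpow_mult_distr. ring. }
  set (Nn := fun n => CSeries (fun k => Cmult (Cmult (f k) (RtoC (c n k))) (pi_mass alpha (RtoC sigma) k))).
  assert (HNum : forall n, is_series (fun k => Cmult (Cmult (f k) (RtoC (c n k))) (pi_mass alpha (RtoC sigma) k)) (Nn n)).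
  { intros n. apply C_abs_ex.
    apply ex_series_ext with (fun k => Cmod (f k) * (Pw lam k * Rabs (c n k))).
    { intros k. rewrite Hp, !Cmod_mult, !Cmod_R, (Rabs_pos_eq (Pw lam k)). req. ring. left; apply Pw_pos; auto. }
    apply abs_conv_EB; auto. apply cc_EB. }
  set (u := (RtoC (alpha / sigma) * z)%C).
  set (A := fun k n => (f k * RtoC (Pw lam k * Ch (- lam) n k) * ex u n)%C).
  set (t := Cmod u).
  assert (Ht : 0 <= t) by apply Cmod_ge_0.
  assert (HAin : forall k, is_series (fun n => A k n)
                  (f k * RtoC (Pw lam k) * (Cpow (1 + u) k * Cexp (RtoC (- lam) * u)))%C).
  { intros k. apply is_series_ext with (fun n => (f k * RtoC (Pw lam k)) * (RtoC (Ch (- lam) n k) * ex u n))%C.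
    { intros n. unfold A. rewrite RtoC_mult. match goal with |- ?x = ?y => change (@eq C x y) end. ring. }
    apply C_is_series_scal. apply Ch_gen. }
  assert (Bnd : forall k n, Cmod (A k n) <= Cmod (f k) * Pw lam k * (Ch lam n k * (t ^ n / INR (fact n)))).
  { intros k n. unfold A. rewrite !Cmod_mult, Cmod_R, Cmod_ex. fold t.
    rewrite Rabs_mult, (Rabs_pos_eq (Pw lam k)) by (left; apply Pw_pos; auto).
    assert (E : Rabs (Ch (- lam) n k) <= Ch lam n k).
    { eapply Rle_trans. apply Ch_abs. rewrite Rabs_Ropp, Rabs_pos_eq by lra. lra. }
    assert (0 <= Cmod (f k)) by apply Cmod_ge_0. assert (0 < Pw lam k) by (apply Pw_pos; auto).
    assert (0 <= t ^ n / INR (fact n)) by (apply Rdiv_le_0_compat; [apply pow_le; auto | apply lt_0_INR, lt_O_fact]).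
    rewrite <- !Rmult_assoc. apply Rmult_le_compat_r; auto. apply Rmult_le_compat_l. apply Rmult_le_pos; lra. auto. }
  assert (HBs : forall k, is_series (fun n => Cmod (f k) * Pw lam k * (Ch lam n k * (t ^ n / INR (fact n))))
                   (Cmod (f k) * Pw lam k * ((1 + t) ^ k * exp (lam * t)))).
  { intros k. apply Ris_series_scal. apply Ch_gen_R. }
  assert (H1 : forall k, ex_series (fun n => Cmod (A k n))).
  { intros k. apply ex_series_Rle with (fun n => Cmod (f k) * Pw lam k * (Ch lam n k * (t ^ n / INR (fact n)))).
    intros n. rewrite Rabs_pos_eq by apply Cmod_ge_0. auto. eexists; eauto. }
  assert (H2 : ex_series (fun k => Series (fun n => Cmod (A k n)))).
  { apply ex_series_Rle with (fun k => exp (lam * t) * exp (- lam) * (Cmod (f k) * ((lam * (1 + t)) ^ k / INR (fact k)))).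
    - intros k. rewrite Rabs_pos_eq. 2:{ apply Series_nonneg; auto. intros; apply Cmod_ge_0. }
      eapply Rle_trans. apply Series_le. 2: eexists; apply HBs.
      intros n; split. apply Cmod_ge_0. apply Bnd.
      rewrite (is_series_unique _ _ (HBs k)). unfold Pw. rewrite Rpow_mult_distr. right. field. apply INR_fact_neq_0.
    - destruct (abs_conv f lam (lam * (1 + t)) Hl) as [l Hl']; auto. nra.
      eexists. apply Ris_series_scal. eauto. }
  destruct (C_fubini A H1 H2) as [Hin Hout].
  assert (Hcol : forall n, Cmult (coef alpha sigma (monic_poly a) f n) (Cpow z n) = CSeries (fun k => A k n)).
  { intros n. symmetry. apply CSeries_unique.
    assert (NZa : RtoC (alpha ^ n) <> 0%C) by (apply RtoC_neq0, pow_nonzero; lra).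
    assert (NZs : RtoC (sigma ^ n) <> 0%C) by (apply RtoC_neq0, pow_nonzero; lra).
    assert (NZf := fact_neq0 n).
    apply is_series_ext with (fun k => (ex u n / RtoC (alpha ^ n)) * Cmult (Cmult (f k) (RtoC (c n k))) (pi_mass alpha (RtoC sigma) k))%C.
    { intros k. unfold A. rewrite Hp. unfold c. rewrite Hcn. rewrite !RtoC_mult.
      match goal with |- ?x = ?y => change (@eq C x y) end. field. auto. }
    assert (Hden' : CSeries (fun k => Cmult (RtoC (monic_poly a n (alpha * INR k) ^ 2)) (pi_mass alpha (RtoC sigma) k))
                           = RtoC (sigma ^ n * INR (fact n))) by exact (Hden n).
    unfold coef. rewrite Hden'.
    change (CSeries (fun k => Cmult (Cmult (f k) (RtoC (monic_poly a n (alpha * INR k)))) (pi_mass alpha (RtoC sigma) k))) with (Nn n).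
    replace (Cmult (Cdiv (Nn n) (RtoC (sigma ^ n * INR (fact n)))) (Cpow z n)) with (ex u n / RtoC (alpha ^ n) * Nn n)%C.
    apply C_is_series_scal. apply HNum.
    unfold u. rewrite ex_scal. unfold ex. rewrite <- RtoC_pow, RtoC_mult.
    unfold Rdiv. rewrite Rpow_mult_distr, pow_inv, !RtoC_mult, RtoC_inv by (apply pow_nonzero; lra).
    field. repeat split; auto. }
  set (w' := Cdiv (Cplus (RtoC sigma) (Cmult (RtoC alpha) z)) (RtoC (alpha ^ 2))).
  assert (HW : w' = (RtoC lam * (1 + u))%C) by (unfold w', u, lam; apply Wexpr; auto).
  assert (Hrow : forall k, CSeries (A k) = (Cexp (Copp w') * rhs_term alpha sigma f z k)%C).
  { intros k. apply CSeries_unique. 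
    replace (Cexp (Copp w') * rhs_term alpha sigma f z k)%C with
      (f k * RtoC (Pw lam k) * (Cpow (1 + u) k * Cexp (RtoC (- lam) * u)))%C. apply HAin.
    unfold rhs_term. cbv zeta. fold w'. rewrite HW.
    replace (Copp (RtoC lam * (1 + u)))%C with (RtoC (- lam) + RtoC (- lam) * u)%C.
    2:{ rewrite RtoC_opp. ring. }
    rewrite Cexp_add, Cexp_R. rewrite Cpow_mult, <- RtoC_pow. unfold Pw. rewrite !RtoC_mult.
    rewrite RtoC_div by apply INR_fact_neq_0.
    assert (NZf := fact_neq0 k). field. auto. }
  assert (Habs := part4 alpha sigma f halpha hsigma hf z).
  assert (Hr := C_abs_ex _ Habs).
  unfold SB_transform. rewrite (CSeries_ext _ _ Hcol).
  rewrite (CSeries_unique _ _ Hout). rewrite (CSeries_ext _ _ Hrow).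
  apply CSeries_unique. apply C_is_series_scal. auto.
Qed.

Theorem theorem4p2 (alpha sigma : R) (a : nat -> nat -> R)
  (halpha : 0 < alpha) (hsigma : 0 < sigma)
  (horth : orthogonal_wrt alpha sigma (monic_poly a))
  (f : nat -> Complex.C) (hf : in_L2 alpha sigma f) :
  (* (S f)(z) = integral of f against pi_{alpha, sigma + alpha z} *)
  (forall z : Complex.C,
     is_series (fun k => Cmult (f k)
                  (pi_mass alpha (Cplus (RtoC sigma) (Cmult (RtoC alpha) z)) k))
               (SB_transform alpha sigma (monic_poly a) f z)
   /\ SB_transform alpha sigma (monic_poly a) f z =
        Cmult (Cexp (Copp (Cdiv (Cplus (RtoC sigma) (Cmult (RtoC alpha) z))
                                (RtoC (alpha ^ 2)))))
              (CSeries (rhs_term alpha sigma f z)))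
  (* for real z > -sigma/alpha, pi_{alpha, sigma + alpha z} is a probability *)
  /\ (forall x : R, - sigma / alpha < x ->
        (forall k, snd (pi_mass alpha (RtoC (sigma + alpha * x)) k) = 0
                   /\ 0 <= fst (pi_mass alpha (RtoC (sigma + alpha * x)) k))
        /\ is_series (pi_mass alpha (RtoC (sigma + alpha * x))) (RtoC 1))
  (* absolute convergence of the right-hand series *)
  /\ (forall z : Complex.C, ex_series (fun n => Cmod (rhs_term alpha sigma f z n)))
  (* uniform convergence on compact sets (every compact set lies in a disk) *)
  /\ (forall r eps : R, 0 < eps ->
        exists N : nat, forall (n : nat) (z : Complex.C), (N <= n)%nat -> Cmod z <= r ->
          Cmod (Cminus (CSeries (rhs_term alpha sigma f z))
                       (sum_n (rhs_term alpha sigma f z) n)) < eps).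
Proof.
  split.
  - intros z. split.
    + rewrite (part12 alpha sigma a halpha hsigma horth f hf z).
      apply is_series_ext with (fun k => Cmult (Cexp (Copp (Cdiv (Cplus (RtoC sigma) (Cmult (RtoC alpha) z))
                                (RtoC (alpha ^ 2))))) (rhs_term alpha sigma f z k)).
      { intros k. unfold rhs_term, pi_mass. cbv zeta.
        match goal with |- ?x = ?y => change (@eq C x y) end. ring. }
      apply C_is_series_scal. apply C_abs_ex. apply part4; auto.
    + apply part12; auto.
  - split. apply part3; auto. split. apply part4; auto. apply part5; auto.
Qed.
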